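(* Let $k$ be an étale algebra over $\mathbb{Q}$ with maximal order $\mathcal{O}_k$, and let $\mathcal{O}'\subset\mathcal{O}\subset\mathcal{O}_k$ be orders with conductors $\mathfrak{f}'$ and $\mathfrak{f}$ respectively. Then $\mathfrak{f}'\subset\mathfrak{f}$. If $p$ is a prime number such that $p\mid N(\mathfrak{f})$ and $p\nmid(\mathcal{O}:\mathcal{O}')$, then $\mathfrak{f}'_p=\mathfrak{f}_p$.
   Context: An étale algebra is $k=k_1\oplus\cdots\oplus k_s$ with number fields $k_i$; $\mathcal{O}_k=\oplus\mathcal{O}_{k_i}$. An order is a subring of $\mathcal{O}_k$ with unit of finite index. The conductor of an order $\mathcal{O}$ is the largest $\mathcal{O}_k$-ideal contained in $\mathcal{O}$. For an integral invertible $\mathcal{O}_k$-ideal $\mathfrak{a}=\oplus\mathfrak{a}_i$, its norm is $N(\mathfrak{a})=\prod N(\mathfrak{a}_i)=(\mathcal{O}_k:\mathfrak{a})$, and its $p$-part $\mathfrak{a}_p$ is $\oplus_i\mathfrak{a}_{i,p}$, where $\mathfrak{a}_{i,p}$ is the product of the prime-power factors of $\mathfrak{a}_i$ at primes above $p$; equivalently $\mathfrak{a}_p=\mathfrak{a}+p^a\mathcal{O}_k$ for all sufficiently large $a$. *)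

(* Defs.v *)
From HB Require Import structures.
From mathcomp Require Import all_boot all_order all_algebra all_field.
Set Implicit Arguments. Unset Strict Implicit. Unset Printing Implicit Defensive.
Import Order.TTheory GRing.Theory Num.Theory.
Local Open Scope ring_scope.

(* Number fields are realized (up to isomorphism) as subfields of algC of
   finite dimension over Q. An etale algebra k = k_1 (+) ... (+) k_s is realized
   inside {ffun 'I_s -> algC} (componentwise ring operations) as the set of
   x with x i \in k_i for all i. *)

Definition number_field (K : {pred algC}) : Prop :=
  [/\ 1 \in K,
      {in K &, forall x y, x - y \in K},
      {in K &, forall x y, x * y \in K},
      {in K, forall x, x != 0 -> x^-1 \in K} &
      exists bs : seq algC, all (mem K) bs /\
        forall x, x \in K -> exists c : 'I_(size bs) -> rat,
          x = \sum_(i < size bs) ratr (c i) * bs`_i ].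

Definition elt (s : nat) := {ffun 'I_s -> algC}.

Definition sub_set (s : nat) (A B : elt s -> Prop) : Prop := forall x, A x -> B x.

Definition maxorder (s : nat) (K : 'I_s -> {pred algC}) (x : elt s) : Prop :=
  forall i, x i \in K i /\ x i \in Aint.

(* (A : B) = n : B is a subgroup of A with exactly n cosets in A *)
Definition index_eq (s : nat) (A B : elt s -> Prop) (n : nat) : Prop :=
  exists r : seq (elt s),
    [/\ size r = n,
        forall x, x \in r -> A x,
        forall i j, (i < n)%N -> (j < n)%N -> B (r`_i - r`_j) -> i = j &
        forall a, A a -> exists2 x, x \in r & B (a - x)].

Definition is_order (s : nat) (K : 'I_s -> {pred algC}) (O : elt s -> Prop) : Prop :=
  [/\ sub_set O (maxorder K),
      O 1,
      forall x y, O x -> O y -> O (x - y),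
      forall x y, O x -> O y -> O (x * y) &
      exists n, index_eq (maxorder K) O n].

Definition is_Ok_ideal (s : nat) (K : 'I_s -> {pred algC}) (I : elt s -> Prop) : Prop :=
  [/\ sub_set I (maxorder K),
      I 0,
      forall x y, I x -> I y -> I (x - y) &
      forall a x, maxorder K a -> I x -> I (a * x)].

Definition is_conductor (s : nat) (K : 'I_s -> {pred algC}) (O f : elt s -> Prop) : Prop :=
  [/\ is_Ok_ideal K f, sub_set f O &
      forall I, is_Ok_ideal K I -> sub_set I O -> sub_set I f].

Definition add_pow_Ok (s : nat) (K : 'I_s -> {pred algC}) (I : elt s -> Prop)
    (p a : nat) (x : elt s) : Prop :=
  exists y z, [/\ I y, maxorder K z & x = y + (p ^ a)%N%:R * z].

(* I_p = J_p, where the p-part is a_p = a + p^a O_k for all sufficiently large a *)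
Definition ppart_eq (s : nat) (K : 'I_s -> {pred algC}) (p : nat) (I J : elt s -> Prop) : Prop :=
  exists a0, forall a, (a0 <= a)%N ->
    forall x, add_pow_Ok K I p a x <-> add_pow_Ok K J p a x.

(* Main.v *)
Require Import Defs.
From HB Require Import structures.
From mathcomp Require Import all_boot all_order all_algebra all_field.
From Stdlib Require Import ClassicalEpsilon.
Import Order.TTheory GRing.Theory Num.Theory.
Local Open Scope ring_scope.

Section Gen.
Variable V : zmodType.
Variable P : V -> Prop.
Hypothesis h0 : P 0.
Hypothesis hB : forall x y, P x -> P y -> P (x - y).

Lemma addP x y : P x -> P y -> P (x + y).
Proof. move=> hx hy. have := hB _ _ hx (hB _ _ h0 hy). by rewrite sub0r opprK. Qed.

Lemma mulrnP x n : P x -> P (x *+ n).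
Proof.
move=> hx; elim: n => [|n IH]; first by rewrite mulr0n.
rewrite mulrS; exact: addP.
Qed.

Lemma mulrzP x z : P x -> P (x *~ z).
Proof.
move=> hx; case: z => n; first exact: mulrnP.
have -> : x *~ Negz n = 0 - x *+ n.+1 by rewrite NegzE mulrNz sub0r.
apply: hB => //; exact: mulrnP.
Qed.

Lemma sumP n (F : 'I_n -> V) : (forall i, P (F i)) -> P (\sum_(i < n) F i).
Proof.
move=> hF; apply: (big_ind P) => //; first exact: addP.
Qed.
End Gen.

Lemma zl (V : zmodType) (x a b c : V) : a - b = (x + a - c) - (x + b - c).
Proof. by rewrite opprB addrA subrK opprD addrA [x + a]addrC addrK. Qed.

Lemma lagrange (s : nat) (A B : elt s -> Prop) n :
  A 0 -> (forall x y, A x -> A y -> A (x - y)) ->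
  B 0 -> (forall x y, B x -> B y -> B (x - y)) ->
  index_eq A B n -> forall x, A x -> B (x *+ n).
Proof.
move=> hA0 hAB hB0 hBB [r [hsz hrA hinj hcov]] x hx.
have hsel : forall i : 'I_n, exists y, y \in r /\ B (x + r`_i - y).
  move=> i; have hi : A (x + r`_i).
    apply: (@addP _ A hA0 hAB) => //; apply: hrA; apply: mem_nth; by rewrite hsz.
  have [y yr hy] := hcov _ hi; by exists y.
pose g i := proj1_sig (constructive_indefinite_description _ (hsel i)).
have hg i : g i \in r /\ B (x + r`_i - g i) := proj2_sig (constructive_indefinite_description _ (hsel i)).
have hlt i : (index (g i) r < n)%N by rewrite -hsz index_mem; case: (hg i).
pose sg i : 'I_n := Ordinal (hlt i).
have hsig i : r`_(sg i) = g i by rewrite /= nth_index //; case: (hg i).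
have inj : injective sg.
  move=> i j hij; have e : g i = g j by rewrite -!hsig hij.
  apply: val_inj; apply: (hinj _ _ (ltn_ord i) (ltn_ord j)).
    have -> : r`_i - r`_j = (x + r`_i - g j) - (x + r`_j - g j) by apply: zl.
  rewrite -{1}e; exact: hBB _ _ (proj2 (hg i)) (proj2 (hg j)).
have hs : B (\sum_(i < n) (x + r`_i - r`_(sg i))).
  apply: (@sumP _ B hB0 hBB) => i; rewrite hsig; exact: (proj2 (hg i)).
move: hs; rewrite sumrB big_split /= sumr_const card_ord.
have -> : \sum_(i < n) r`_(sg i) = \sum_(i < n) r`_i by rewrite [RHS](reindex_inj inj).
by rewrite addrK.
Qed.

Theorem lemma2p1 (s : nat) (K : 'I_s -> {pred algC})
    (HK : forall i, number_field (K i))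
    (O O' f f' : elt s -> Prop)
    (hO : is_order K O) (hO' : is_order K O') (hsub : sub_set O' O)
    (hf : is_conductor K O f) (hf' : is_conductor K O' f') :
  sub_set f' f /\
  (forall (p Nf idx : nat), prime p ->
     index_eq (maxorder K) f Nf -> (p %| Nf)%N ->
     index_eq O O' idx -> ~~ (p %| idx)%N ->
     ppart_eq K p f' f).
Proof.
case: hf => [hfI hfO hfmax]; case: hf' => [hf'I hf'O hf'max].
have s1 : sub_set f' f := hfmax _ hf'I (fun x h => hsub _ (hf'O _ h)).
split => // p Nf idx pp _ _ hidx hndvd.
case: hO => [hOsub hO1 hOB hOM _]; case: hO' => [hO'sub hO'1 hO'B hO'M _].
have hO0 : O 0 by have := hOB _ _ hO1 hO1; rewrite subrr.
have hO'0 : O' 0 by have := hO'B _ _ hO'1 hO'1; rewrite subrr.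
have hlag := @lagrange s O O' idx hO0 hOB hO'0 hO'B hidx.
have hM0 : maxorder K 0.
  move=> i; rewrite ffunE; split; last exact: rpred0.
  case: (HK i) => h1 hsubK _ _ _; have := hsubK 1 1 h1 h1; by rewrite subrr.
have hMB : forall x y, maxorder K x -> maxorder K y -> maxorder K (x - y).
  move=> x y hx hy i; rewrite !ffunE; case: (hx i) => hx1 hx2; case: (hy i) => hy1 hy2.
  split; last exact: rpredB.
  case: (HK i) => h1 hsubK _ _ _; exact: hsubK.
case: hfI => [hfsub hf0 hfB hfM].
pose I := fun y => exists x, f x /\ y = x *+ idx.
have hIf' : sub_set I f'.
  apply: hf'max.
    split.
    - move=> y [x [fx ->]]; apply: (@mulrnP _ (maxorder K) hM0 hMB); exact: hfsub.
    - by exists 0; split => //; rewrite mul0rn.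
    - move=> y z [x1 [h1 ->]] [x2 [h2 ->]]; exists (x1 - x2); split; first exact: hfB.
      by rewrite mulrnBl.
    - move=> a y ha [x [hx ->]]; exists (a * x); split; first exact: hfM.
      by rewrite mulrnAr.
  move=> y [x [hx ->]]; apply: hlag; exact: hfO.
case: hf'I => [hf'sub hf'0 hf'B hf'M].
exists 0%N => a _ x; split.
  move=> [y [z [hy hz ->]]]; exists y, z; split => //; exact: s1.
move=> [y [z [hy hz ->]]].
have cop : coprime idx (p ^ a).
  by apply: coprimeXr; rewrite coprime_sym prime_coprime.
have [u [v huv]] := Bezoutz (Posz idx) (Posz (p ^ a)%N).
have g1 : gcdz (Posz idx) (Posz (p ^ a)%N) = 1 by rewrite /gcdz /= (eqP cop).
rewrite g1 in huv.
have hy' : f' ((y *+ idx) *~ u).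
  apply: (@mulrzP _ f' hf'0 hf'B); apply: hIf'; by exists y.
have hz' : maxorder K (y *~ v + z).
  apply: (@addP _ (maxorder K) hM0 hMB) => //.
  apply: (@mulrzP _ (maxorder K) hM0 hMB); exact: hfsub.
exists ((y *+ idx) *~ u), (y *~ v + z); split => //.
rewrite mulrDr addrA; congr (_ + _).
rewrite mulr_natl !pmulrn -!mulrzA -mulrzDr.
by rewrite [(Posz idx * u)%R]mulrC huv mulr1z.
Qed.
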